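(* Let $0<\alpha\leq 1/2$ and let $\lambda_*(\alpha)$ be as defined below. There exists a non-trivial function $\omega=(\omega_1,\omega_2)$, with $\omega_1$ on $[0,2\pi]$ and $\omega_2$ on $[1,\infty)$, such that $$\left(-i\frac{d}{d\theta} -\alpha\right)^2\omega_1 = \lambda_*(\alpha)\, \omega_1 \text{ on } (0,2\pi),\qquad -\frac{d^2}{dr^2}\omega_2 = \frac{\lambda_*(\alpha)}{r^2}\,\omega_2 \text{ on } (1,\infty),$$ $$\omega_1(0)=\omega_1(2\pi)=\omega_2(1),\qquad \omega_1'(0)-\omega_1'(2\pi)+\omega_2'(1)=0,$$ and moreover: (1) if $0<\alpha<1/2$, then $\omega$ vanishes nowhere on $\Gamma$; if $\alpha=1/2$, then $\omega$ vanishes exactly at the point $(-1,0)\in\Gamma_1$ (i.e. $\theta=\pi$); (2) $\omega_2$ is real-valued, and the function $j:=\operatorname{Re}\overline{\omega_1}\left(-i\frac{d}{d\theta}-\alpha\right)\omega_1$ on $(0,2\pi)$ is constant, equal to $$j= - \sqrt{\lambda_*(\alpha)}\, \frac{\sin(2\pi\alpha)}{\sin(2\pi\sqrt{\lambda_*(\alpha)})};$$ (3) if $0<\alpha<1/2$, then $$\int_0^{2\pi} \frac{d\theta}{|\omega_1(\theta)|^2} = \frac{2\pi\alpha}{\sqrt{\lambda_*(\alpha)}}\, \frac{\sin(2\pi\sqrt{\lambda_*(\alpha)})}{\sin(2\pi\alpha)}.$$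
   Context: $\Gamma=\Gamma_1\cup\Gamma_2$ with $\Gamma_1$ the unit circle in $\mathbb{R}^2$ parametrized by $\theta\mapsto e^{i\theta}$, $\theta\in[0,2\pi]$, and $\Gamma_2=\{(r,0):r>1\}$ parametrized by $r$; $\omega_1,\omega_2$ are the restrictions of $\omega$ to $\Gamma_1,\Gamma_2$ in these parametrizations. For $0<\alpha\le1/2$, $\lambda_*(\alpha)$ is the unique solution $\lambda\in(0,\alpha^2)$ of $\cos(2\pi\alpha)=\cos(2\pi\sqrt\lambda)-\frac{1-\sqrt{1-4\lambda}}{4\sqrt\lambda}\sin(2\pi\sqrt\lambda)$. *)

(* Defs.v *)
From Stdlib Require Import Reals.
From Coquelicot Require Import Coquelicot.
Open Scope R_scope.

(* lambda is the number lambda_*(alpha): the (unique) solution in (0, alpha^2) of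
   cos(2 pi alpha) = cos(2 pi sqrt l) - (1 - sqrt(1-4 l))/(4 sqrt l) * sin(2 pi sqrt l). *)
Definition is_lambda_star (alpha l : R) : Prop :=
  0 < l < alpha ^ 2 /\
  cos (2 * PI * alpha) =
    cos (2 * PI * sqrt l)
    - (1 - sqrt (1 - 4 * l)) / (4 * sqrt l) * sin (2 * PI * sqrt l).

(* Main.v *)
Require Import Defs.
From Stdlib Require Import Reals Lra Psatz.
From Coquelicot Require Import Coquelicot.
Open Scope R_scope.


Lemma is_derive_C (x y : R -> R) t dx dy :
  is_derive x t dx -> is_derive y t dy ->
  is_derive (fun s => (x s, y s) : C) t ((dx, dy) : C).
Proof.
  unfold is_derive. intros Hx Hy.
  apply (filterdiff_comp'_2 x y (fun u v => (u, v) : C) t _ _ (fun u v => (u,v) : C) Hx Hy).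
  apply filterdiff_ext_lin with (fun t => t).
  - apply filterdiff_ext with (fun t => t). intros [a b]; reflexivity. apply filterdiff_id.
  - intros [a b]; reflexivity.
Qed.

Definition Xf (c1 s1 al u v t : R) := c1 * u * cos (al * (t - PI)) - s1 * v * sin (al * (t - PI)).
Definition Yf (c1 s1 al u v t : R) := c1 * u * sin (al * (t - PI)) + s1 * v * cos (al * (t - PI)).

Lemma Xf_der c1 s1 al (u v : R -> R) u' v' t :
  is_derive u t u' -> is_derive v t v' ->
  is_derive (fun t => Xf c1 s1 al (u t) (v t) t) t (Xf c1 s1 al u' v' t - al * Yf c1 s1 al (u t) (v t) t).
Proof.
  intros Hu Hv. unfold Xf, Yf.
  auto_derive.
  - split. exists u'; exact Hu. split. exists v'; exact Hv. repeat split.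
  - replace (Derive (fun x => u x) t) with u' by (symmetry; apply is_derive_unique; exact Hu).
    replace (Derive (fun x => v x) t) with v' by (symmetry; apply is_derive_unique; exact Hv).
    unfold Rminus. ring.
Qed.

Lemma Yf_der c1 s1 al (u v : R -> R) u' v' t :
  is_derive u t u' -> is_derive v t v' ->
  is_derive (fun t => Yf c1 s1 al (u t) (v t) t) t (Yf c1 s1 al u' v' t + al * Xf c1 s1 al (u t) (v t) t).
Proof.
  intros Hu Hv. unfold Xf, Yf.
  auto_derive.
  - split. exists u'; exact Hu. split. exists v'; exact Hv. repeat split.
  - replace (Derive (fun x => u x) t) with u' by (symmetry; apply is_derive_unique; exact Hu).
    replace (Derive (fun x => v x) t) with v' by (symmetry; apply is_derive_unique; exact Hv).
    unfold Rminus. ring.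
Qed.

Lemma atan_der c1 s1 (u v : R -> R) u' v' t :
  is_derive u t u' -> is_derive v t v' -> c1 <> 0 -> u t <> 0 ->
  is_derive (fun t => atan (s1 * v t / (c1 * u t))) t
     (c1 * s1 * (u t * v' - v t * u') / (c1 ^ 2 * u t ^ 2 + s1 ^ 2 * v t ^ 2)).
Proof.
  intros Hu Hv Hc Hu0.
  auto_derive.
  - split. exists v'; exact Hv. split. exists u'; exact Hu. split; [|exact I].
    intro H. apply Rmult_integral in H. tauto.
  - replace (Derive (fun x => u x) t) with u' by (symmetry; apply is_derive_unique; exact Hu).
    replace (Derive (fun x => v x) t) with v' by (symmetry; apply is_derive_unique; exact Hv).
    assert (Hcu : c1 * u t <> 0) by (intro H; apply Rmult_integral in H; tauto).
    assert (0 < (c1*u t)*(c1*u t)) by (destruct (Rtotal_order (c1*u t) 0) as [h|[h|h]]; [nra| tauto | nra]).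
    assert (0 <= (s1*v t)*(s1*v t)) by nra.
    field. split; [|tauto]. nra.
Qed.

Lemma der_lin (f g : R -> R) a b k t :
  is_derive f t a -> is_derive g t b ->
  is_derive (fun t => f t - k * g t) t (a - k * b).
Proof.
  intros Hf Hg. auto_derive.
  - split. exists a; exact Hf. split. exists b; exact Hg. exact I.
  - replace (Derive (fun x => f x) t) with a by (symmetry; apply is_derive_unique; exact Hf).
    replace (Derive (fun x => g x) t) with b by (symmetry; apply is_derive_unique; exact Hg).
    ring.
Qed.

Lemma der_lin' (f g : R -> R) a b k t :
  is_derive f t a -> is_derive g t b ->
  is_derive (fun t => f t + k * g t) t (a + k * b).
Proof.
  intros Hf Hg. auto_derive.
  - split. exists a; exact Hf. split. exists b; exact Hg. exact I.
  - replace (Derive (fun x => f x) t) with a by (symmetry; apply is_derive_unique; exact Hf).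
    replace (Derive (fun x => g x) t) with b by (symmetry; apply is_derive_unique; exact Hg).
    ring.
Qed.

Definition Sg la := sin (2*PI*sqrt la).
Definition ff la t := (sin (sqrt la * (2*PI - t)) + sin (sqrt la * t)) / Sg la.
Definition gg la t := (sin (sqrt la * (2*PI - t)) - sin (sqrt la * t)) / Sg la.
Definition ff' la t := sqrt la * (cos (sqrt la * t) - cos (sqrt la * (2*PI - t))) / Sg la.
Definition gg' la t := - sqrt la * (cos (sqrt la * (2*PI - t)) + cos (sqrt la * t)) / Sg la.

Lemma ff_der la t : Sg la <> 0 -> is_derive (ff la) t (ff' la t).
Proof. intro HS. unfold ff, ff'. unfold Sg in *. auto_derive. easy. unfold Rminus. field. exact HS. Qed.
Lemma gg_der la t : Sg la <> 0 -> is_derive (gg la) t (gg' la t).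
Proof. intro HS. unfold gg, gg'. unfold Sg in *. auto_derive. easy. unfold Rminus. field. exact HS. Qed.
Lemma ff'_der la t : 0 <= la -> Sg la <> 0 -> is_derive (ff' la) t (- la * ff la t).
Proof. intros Hl HS. unfold ff, ff'. unfold Sg in *. auto_derive. easy.
  unfold Rminus. unfold Rminus. assert (Hm : la = sqrt la * sqrt la) by (symmetry; apply sqrt_sqrt; exact Hl).
  set (m := sqrt la) in *. rewrite Hm at 1. field. exact HS. Qed.
Lemma gg'_der la t : 0 <= la -> Sg la <> 0 -> is_derive (gg' la) t (- la * gg la t).
Proof. intros Hl HS. unfold gg, gg'. unfold Sg in *. auto_derive. easy.
  unfold Rminus. assert (Hm : la = sqrt la * sqrt la) by (symmetry; apply sqrt_sqrt; exact Hl).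
  set (m := sqrt la) in *. rewrite Hm at 1. field. exact HS. Qed.

Lemma wronsk la t : Sg la <> 0 ->
  ff la t * gg' la t - gg la t * ff' la t = -2 * sqrt la / Sg la.
Proof.
  intro HS. unfold ff, gg, ff', gg'.
  assert (E : Sg la = sin (sqrt la * (2*PI - t)) * cos (sqrt la * t) + cos (sqrt la * (2*PI - t)) * sin (sqrt la * t)).
  { rewrite <- sin_plus. unfold Sg. f_equal. ring. }
  set (P := sin (sqrt la * (2*PI - t))) in *.
  set (Q := sin (sqrt la * t)) in *.
  set (Pc := cos (sqrt la * (2*PI - t))) in *.
  set (Qc := cos (sqrt la * t)) in *.
  transitivity (-2 * sqrt la * (P * Qc + Pc * Q) / (Sg la * Sg la)).
  field. exact HS.
  rewrite <- E. field. exact HS.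
Qed.

Lemma der_scal (h : R -> R) a k t :
  is_derive h t a -> is_derive (fun t => k * h t) t (k * a).
Proof.
  intros Hh. auto_derive.
  - exists a; exact Hh.
  - replace (Derive (fun x => h x) t) with a by (symmetry; apply is_derive_unique; exact Hh). ring.
Qed.


Lemma Xf_0 c1 s1 al u v : Xf c1 s1 al u v 0 = c1*u*cos(PI*al) + s1*v*sin(PI*al).
Proof. unfold Xf. replace (al*(0-PI)) with (-(PI*al)) by ring. rewrite cos_neg, sin_neg. ring. Qed.
Lemma Yf_0 c1 s1 al u v : Yf c1 s1 al u v 0 = - c1*u*sin(PI*al) + s1*v*cos(PI*al).
Proof. unfold Yf. replace (al*(0-PI)) with (-(PI*al)) by ring. rewrite cos_neg, sin_neg. ring. Qed.
Lemma Xf_2 c1 s1 al u v : Xf c1 s1 al u v (2*PI) = c1*u*cos(PI*al) - s1*v*sin(PI*al).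
Proof. unfold Xf. replace (al*(2*PI-PI)) with (PI*al) by ring. ring. Qed.
Lemma Yf_2 c1 s1 al u v : Yf c1 s1 al u v (2*PI) = c1*u*sin(PI*al) + s1*v*cos(PI*al).
Proof. unfold Yf. replace (al*(2*PI-PI)) with (PI*al) by ring. ring. Qed.

Lemma XY_norm c1 s1 al u v t :
  Xf c1 s1 al u v t ^ 2 + Yf c1 s1 al u v t ^ 2 = c1^2*u^2 + s1^2*v^2.
Proof.
  unfold Xf, Yf. assert (H := sin2_cos2 (al*(t-PI))). unfold Rsqr in H.
  set (ca := cos (al*(t-PI))) in *. set (sa := sin (al*(t-PI))) in *.
  transitivity ((c1^2*u^2 + s1^2*v^2) * (sa*sa+ca*ca)). ring. rewrite H. ring.
Qed.

Lemma XY_wr c1 s1 al u v u' v' t :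
  Xf c1 s1 al u v t * Yf c1 s1 al u' v' t - Yf c1 s1 al u v t * Xf c1 s1 al u' v' t
  = c1 * s1 * (u * v' - v * u').
Proof.
  unfold Xf, Yf. assert (H := sin2_cos2 (al*(t-PI))). unfold Rsqr in H.
  set (ca := cos (al*(t-PI))) in *. set (sa := sin (al*(t-PI))) in *.
  transitivity (c1 * s1 * (u * v' - v * u') * (sa*sa+ca*ca)). ring. rewrite H. ring.
Qed.

Lemma ff_0 la : Sg la <> 0 -> ff la 0 = 1.
Proof. intro HS. unfold ff. unfold Sg in *. replace (sqrt la * (2*PI-0)) with (2*PI*sqrt la) by ring.
  replace (sqrt la * 0) with 0 by ring. rewrite sin_0. field. exact HS. Qed.
Lemma gg_0 la : Sg la <> 0 -> gg la 0 = 1.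
Proof. intro HS. unfold gg. unfold Sg in *. replace (sqrt la * (2*PI-0)) with (2*PI*sqrt la) by ring.
  replace (sqrt la * 0) with 0 by ring. rewrite sin_0. field. exact HS. Qed.
Lemma ff_2 la : Sg la <> 0 -> ff la (2*PI) = 1.
Proof. intro HS. unfold ff. unfold Sg in *. replace (sqrt la * (2*PI)) with (2*PI*sqrt la) by ring.
  replace (sqrt la * (2*PI-2*PI)) with 0 by ring. rewrite sin_0. field. exact HS. Qed.
Lemma gg_2 la : Sg la <> 0 -> gg la (2*PI) = -1.
Proof. intro HS. unfold gg. unfold Sg in *. replace (sqrt la * (2*PI)) with (2*PI*sqrt la) by ring.
  replace (sqrt la * (2*PI-2*PI)) with 0 by ring. rewrite sin_0. field. exact HS. Qed.
Lemma ff'_0 la : ff' la 0 = sqrt la * (1 - cos (2*PI*sqrt la)) / Sg la.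
Proof. unfold ff'. replace (sqrt la * (2*PI-0)) with (2*PI*sqrt la) by ring.
  replace (sqrt la * 0) with 0 by ring. rewrite cos_0. reflexivity. Qed.
Lemma ff'_2 la : ff' la (2*PI) = sqrt la * (cos (2*PI*sqrt la) - 1) / Sg la.
Proof. unfold ff'. replace (sqrt la * (2*PI)) with (2*PI*sqrt la) by ring.
  replace (sqrt la * (2*PI-2*PI)) with 0 by ring. rewrite cos_0. reflexivity. Qed.
Lemma gg'_0 la : gg' la 0 = - sqrt la * (cos (2*PI*sqrt la) + 1) / Sg la.
Proof. unfold gg'. replace (sqrt la * (2*PI-0)) with (2*PI*sqrt la) by ring.
  replace (sqrt la * 0) with 0 by ring. rewrite cos_0. reflexivity. Qed.
Lemma gg'_2 la : gg' la (2*PI) = - sqrt la * (cos (2*PI*sqrt la) + 1) / Sg la.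
Proof. unfold gg'. replace (sqrt la * (2*PI)) with (2*PI*sqrt la) by ring.
  replace (sqrt la * (2*PI-2*PI)) with 0 by ring. rewrite cos_0, Rplus_comm. reflexivity. Qed.

Lemma ff_pos la t : 0 < sqrt la -> 2*PI*sqrt la < PI -> 0 <= t <= 2*PI -> 0 < ff la t.
Proof.
  intros Hm Hp Ht. unfold ff, Sg.
  assert (HS : 0 < sin (2*PI*sqrt la)) by (apply sin_gt_0; nra).
  apply Rdiv_lt_0_compat; [|exact HS].
  destruct (Req_dec t 0) as [->|Ht0].
  - replace (sqrt la * (2*PI-0)) with (2*PI*sqrt la) by ring. replace (sqrt la * 0) with 0 by ring.
    rewrite sin_0. lra.
  - assert (0 < sin (sqrt la * t)) by (apply sin_gt_0; nra).
    assert (0 <= sin (sqrt la * (2*PI - t))) by (apply sin_ge_0; nra).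
    lra.
Qed.


Theorem lemma4p3 (alpha lam : R) (Halpha : 0 < alpha <= 1 / 2)
  (Hlam : is_lambda_star alpha lam) :
  exists (w1 dw1 ddw1 w2 dw2 ddw2 : R -> C),
    (forall t, 0 <= t <= 2 * PI -> is_derive w1 t (dw1 t)) /\
    (forall t, 0 < t < 2 * PI -> is_derive dw1 t (ddw1 t)) /\
    (forall r, 1 <= r -> is_derive w2 r (dw2 r)) /\
    (forall r, 1 < r -> is_derive dw2 r (ddw2 r)) /\
    ((exists t, 0 <= t <= 2 * PI /\ w1 t <> RtoC 0) \/
     (exists r, 1 <= r /\ w2 r <> RtoC 0)) /\
    (forall t, 0 < t < 2 * PI ->
       ((- Ci) * ((- Ci) * ddw1 t - RtoC alpha * dw1 t)
        - RtoC alpha * ((- Ci) * dw1 t - RtoC alpha * w1 t))%C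
       = (RtoC lam * w1 t)%C) /\
    (forall r, 1 < r -> (- ddw2 r)%C = (RtoC (lam / r ^ 2) * w2 r)%C) /\
    w1 0 = w1 (2 * PI) /\ w1 (2 * PI) = w2 1 /\
    (dw1 0 - dw1 (2 * PI)%R + dw2 1)%C = RtoC 0 /\
    (alpha < 1 / 2 ->
       (forall t, 0 <= t <= 2 * PI -> w1 t <> RtoC 0) /\
       (forall r, 1 <= r -> w2 r <> RtoC 0)) /\
    (alpha = 1 / 2 ->
       (forall t, 0 <= t <= 2 * PI -> (w1 t = RtoC 0 <-> t = PI)) /\
       (forall r, 1 <= r -> w2 r <> RtoC 0)) /\
    (forall r, 1 <= r -> Im (w2 r) = 0) /\
    (forall t, 0 < t < 2 * PI ->
       Re (Cconj (w1 t) * ((- Ci) * dw1 t - RtoC alpha * w1 t))%C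
       = - sqrt lam * sin (2 * PI * alpha) / sin (2 * PI * sqrt lam)) /\
    (alpha < 1 / 2 ->
       is_RInt (fun t => / (Cmod (w1 t)) ^ 2) 0 (2 * PI)
         (2 * PI * alpha / sqrt lam * (sin (2 * PI * sqrt lam) / sin (2 * PI * alpha)))).
Proof.
  destruct Hlam as [[Hl0 Hl1] Heq].
  assert (Hm0 : 0 < sqrt lam) by (apply sqrt_lt_R0; lra).
  assert (Hma : sqrt lam < alpha).
  { rewrite <- (sqrt_pow2 alpha) by lra. apply sqrt_lt_1; nra. }
  assert (HPI := PI_RGT_0).
  assert (Hp : 2*PI*sqrt lam < PI) by nra.
  assert (HSp : 0 < Sg lam) by (unfold Sg; apply sin_gt_0; nra).
  assert (HS : Sg lam <> 0) by lra.
  assert (Hmm : sqrt lam * sqrt lam = lam) by (apply sqrt_sqrt; lra).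
  set (c1 := cos (PI*alpha)). set (s1 := sin (PI*alpha)).
  assert (Hs1 : 0 < s1) by (apply sin_gt_0; nra).
  assert (Hc1 : 0 <= c1) by (apply cos_ge_0; nra).
  assert (Hcs : s1 * s1 + c1 * c1 = 1) by (assert (H := sin2_cos2 (PI*alpha)); unfold Rsqr in H; exact H).
  assert (Hsin2 : sin (2*PI*alpha) = 2 * s1 * c1)
    by (replace (2*PI*alpha) with (2*(PI*alpha)) by ring; apply sin_2a).
  assert (Hcos2 : cos (2*PI*alpha) = c1 * c1 - s1 * s1)
    by (replace (2*PI*alpha) with (2*(PI*alpha)) by ring; apply cos_2a).
  set (d := sqrt (1 - 4*lam)).
  assert (Hd : d * d = 1 - 4*lam) by (apply sqrt_sqrt; nra).
  set (s := (1 - d)/2).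
  set (w1 := fun t => (Xf c1 s1 alpha (ff lam t) (gg lam t) t, Yf c1 s1 alpha (ff lam t) (gg lam t) t) : C).
  set (dw1 := fun t => (Xf c1 s1 alpha (ff' lam t) (gg' lam t) t - alpha * Yf c1 s1 alpha (ff lam t) (gg lam t) t,
                        Yf c1 s1 alpha (ff' lam t) (gg' lam t) t + alpha * Xf c1 s1 alpha (ff lam t) (gg lam t) t) : C).
  set (ddw1 := fun t => (Xf c1 s1 alpha (-lam * ff lam t) (-lam * gg lam t) t - alpha * Yf c1 s1 alpha (ff' lam t) (gg' lam t) t
                         - alpha * (Yf c1 s1 alpha (ff' lam t) (gg' lam t) t + alpha * Xf c1 s1 alpha (ff lam t) (gg lam t) t),
                         Yf c1 s1 alpha (-lam * ff lam t) (-lam * gg lam t) t + alpha * Xf c1 s1 alpha (ff' lam t) (gg' lam t) t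
                         + alpha * (Xf c1 s1 alpha (ff' lam t) (gg' lam t) t - alpha * Yf c1 s1 alpha (ff lam t) (gg lam t) t)) : C).
  set (w2 := fun r => (exp (s * ln r), 0) : C).
  set (dw2 := fun r => (s * exp (s * ln r) / r, 0) : C).
  set (ddw2 := fun r => (s * (s - 1) * exp (s * ln r) / r ^ 2, 0) : C).
  assert (Hw0 : w1 0 = (1, 0)).
  { unfold w1. rewrite Xf_0, Yf_0, ff_0, gg_0 by exact HS. fold c1 s1.
    apply injective_projections; simpl; nra. }
  assert (Hw2 : w1 (2*PI) = (1, 0)).
  { unfold w1. rewrite Xf_2, Yf_2, ff_2, gg_2 by exact HS. fold c1 s1.
    apply injective_projections; simpl; nra. }
  assert (Hln1 : exp (s * ln 1) = 1) by (rewrite ln_1, Rmult_0_r; apply exp_0).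
  assert (Hss : s * (s - 1) = - lam).
  { replace (s*(s-1)) with ((d*d - 1)/4) by (unfold s; field). rewrite Hd. field. }
  exists w1, dw1, ddw1, w2, dw2, ddw2.
  split.
  { intros t _. unfold w1, dw1. apply is_derive_C.
    - apply Xf_der; [apply ff_der | apply gg_der]; exact HS.
    - apply Yf_der; [apply ff_der | apply gg_der]; exact HS. }
  split.
  { intros t _. unfold dw1, ddw1. apply is_derive_C.
    - apply der_lin.
      + apply Xf_der; [apply ff'_der | apply gg'_der]; lra.
      + apply Yf_der; [apply ff_der | apply gg_der]; exact HS.
    - apply der_lin'.
      + apply Yf_der; [apply ff'_der | apply gg'_der]; lra.
      + apply Xf_der; [apply ff_der | apply gg_der]; exact HS. }
  split.
  { intros r Hr. unfold w2, dw2. apply is_derive_C; [|exact (is_derive_const (V:=R_NormedModule) 0 r)].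
    auto_derive. lra. unfold Rminus. field. lra. }
  split.
  { intros r Hr. unfold dw2, ddw2. apply is_derive_C; [|exact (is_derive_const (V:=R_NormedModule) 0 r)].
    auto_derive. lra. unfold Rminus. field. lra. }
  split.
  { left. exists 0. split. lra. rewrite Hw0. intro H. injection H. lra. }
  split.
  { intros t _. unfold ddw1, dw1, w1. unfold Cminus, Cplus, Cmult, Copp, RtoC, Ci. simpl.
    apply injective_projections; simpl; unfold Xf, Yf; ring. }
  split.
  { intros r Hr. unfold ddw2, w2. unfold Cmult, Copp, RtoC. simpl.
    apply injective_projections; simpl; [|ring]. rewrite Hss. field. lra. }
  split. { rewrite Hw0, Hw2. reflexivity. }
  split. { rewrite Hw2. unfold w2. rewrite Hln1. reflexivity. }
  split.
  { unfold dw1, dw2. rewrite Hln1. rewrite !Xf_0, !Yf_0, !Xf_2, !Yf_2, ff_0, gg_0, ff_2, gg_2 by exact HS.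
    rewrite ff'_0, ff'_2, gg'_0, gg'_2. fold c1 s1.
    unfold Cminus, Cplus, Copp, RtoC. simpl.
    assert (H : c1 * c1 - s1 * s1 = cos (2*PI*sqrt lam) - (1 - d)/(4*sqrt lam) * Sg lam)
      by (rewrite <- Hcos2; exact Heq).
    apply injective_projections; simpl.
    - transitivity (2 * sqrt lam / Sg lam * ((c1*c1 - s1*s1) - cos (2*PI*sqrt lam) * (s1*s1+c1*c1)) + s).
      + field. exact HS.
      + rewrite H, Hcs. unfold s. field. split; lra.
    - field. exact HS. }
  assert (Hw2nz : forall r, 1 <= r -> w2 r <> RtoC 0).
  { intros r Hr H. unfold w2, RtoC in H. injection H. intro H1. assert (H2 := exp_pos (s * ln r)). lra. }
  split.
  { intro Ha. assert (Hc1p : 0 < c1) by (apply cos_gt_0; nra).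
    split; [|exact Hw2nz].
    intros t Ht H. unfold w1, RtoC in H. injection H. intros HY HX.
    assert (HN := XY_norm c1 s1 alpha (ff lam t) (gg lam t) t).
    rewrite HX, HY in HN.
    assert (Hf := ff_pos lam t Hm0 Hp Ht).
    assert (0 < c1 ^ 2 * ff lam t ^ 2) by (apply Rmult_lt_0_compat; apply pow_lt; lra).
    assert (0 <= s1 ^ 2 * gg lam t ^ 2) by (apply Rmult_le_pos; apply pow2_ge_0).
    simpl in HN. lra. }
  split.
  { intro Ha. split; [|exact Hw2nz].
    assert (Hc0 : c1 = 0).
    { unfold c1. rewrite Ha. replace (PI * (1/2)) with (PI/2) by field. apply cos_PI2. }
    assert (Hcm : 0 < cos (sqrt lam * PI)) by (apply cos_gt_0; nra).
    assert (Hg : forall t, gg lam t = 2 * cos (sqrt lam * PI) * sin (sqrt lam * (PI - t)) / Sg lam).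
    { intro t. unfold gg. rewrite form4.
      replace ((sqrt lam * (2 * PI - t) + sqrt lam * t) / 2) with (sqrt lam * PI) by field.
      replace ((sqrt lam * (2 * PI - t) - sqrt lam * t) / 2) with (sqrt lam * (PI - t)) by field.
      reflexivity. }
    intros t Ht. split.
    - intro H. unfold w1, RtoC in H. injection H. intros HY HX.
      assert (HN := XY_norm c1 s1 alpha (ff lam t) (gg lam t) t).
      rewrite HX, HY, Hc0 in HN.
      assert (Hg0 : gg lam t = 0).
      { assert (H0 : s1^2 * gg lam t ^2 = 0) by (simpl in HN |- *; lra).
        apply Rmult_integral in H0. destruct H0 as [H0|H0].
        - simpl in H0. rewrite Rmult_1_r in H0. nra.
        - simpl in H0. rewrite Rmult_1_r in H0. apply Rmult_integral in H0; tauto. }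
      rewrite Hg in Hg0.
      assert (Hsn : sin (sqrt lam * (PI - t)) = 0).
      { unfold Rdiv in Hg0. apply Rmult_integral in Hg0. destruct Hg0 as [H0|H0].
        - apply Rmult_integral in H0. destruct H0 as [H0|H0]; [|exact H0]. lra.
        - apply Rinv_neq_0_compat in HS. contradiction. }
      destruct (Rtotal_order t PI) as [Hlt|[Heq'|Hgt]]; [|exact Heq'|].
      + assert (0 < sin (sqrt lam * (PI - t))) by (apply sin_gt_0; nra). lra.
      + assert (0 < sin (sqrt lam * (t - PI))) by (apply sin_gt_0; nra).
        replace (sqrt lam * (PI - t)) with (- (sqrt lam * (t - PI))) in Hsn by ring.
        rewrite sin_neg in Hsn. lra.
    - intros ->. assert (Hg0 : gg lam PI = 0).
      { rewrite Hg. replace (sqrt lam * (PI - PI)) with 0 by ring. rewrite sin_0. field. exact HS. }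
      unfold w1, RtoC. rewrite Hg0, Hc0. unfold Xf, Yf. apply injective_projections; simpl; ring. }
  split. { intros r _. reflexivity. }
  split.
  { intros t _. unfold w1, dw1, Cconj, Cminus, Cplus, Cmult, Copp, RtoC, Ci, Re. simpl.
    transitivity (Xf c1 s1 alpha (ff lam t) (gg lam t) t * Yf c1 s1 alpha (ff' lam t) (gg' lam t) t
      - Yf c1 s1 alpha (ff lam t) (gg lam t) t * Xf c1 s1 alpha (ff' lam t) (gg' lam t) t).
    - ring.
    - rewrite XY_wr, wronsk by exact HS. rewrite Hsin2. fold (Sg lam). field. exact HS. }
  intro Ha. assert (Hc1p : 0 < c1) by (apply cos_gt_0; nra).
  assert (Hden : forall t, 0 <= t <= 2*PI -> 0 < c1^2 * ff lam t ^2 + s1^2 * gg lam t ^2).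
  { intros t Ht. assert (Hf := ff_pos lam t Hm0 Hp Ht).
    assert (0 < c1 ^ 2 * ff lam t ^ 2) by (apply Rmult_lt_0_compat; apply pow_lt; lra).
    assert (0 <= s1 ^ 2 * gg lam t ^ 2) by (apply Rmult_le_pos; apply pow2_ge_0). lra. }
  set (k := - (Sg lam / (sqrt lam * sin (2*PI*alpha)))).
  set (Fa := fun t => k * atan (s1 * gg lam t / (c1 * ff lam t))).
  set (df := fun t => / (c1^2 * ff lam t ^2 + s1^2 * gg lam t ^2)).
  assert (Hder : forall t, Rmin 0 (2*PI) <= t <= Rmax 0 (2*PI) -> is_derive Fa t (df t)).
  { intros t Ht. rewrite Rmin_left, Rmax_right in Ht by lra.
    assert (Hf := ff_pos lam t Hm0 Hp Ht). assert (Hdt := Hden t Ht).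
    replace (df t) with (k * (c1 * s1 * (ff lam t * gg' lam t - gg lam t * ff' lam t)
                               / (c1 ^ 2 * ff lam t ^ 2 + s1 ^ 2 * gg lam t ^ 2))).
    - apply der_scal. apply atan_der; [apply ff_der; exact HS | apply gg_der; exact HS | lra | lra].
    - rewrite wronsk by exact HS. unfold k, df. rewrite Hsin2. field. repeat split; lra. }
  assert (Hcont : forall t, Rmin 0 (2*PI) <= t <= Rmax 0 (2*PI) -> continuous df t).
  { intros t Ht. rewrite Rmin_left, Rmax_right in Ht by lra. assert (Hdt := Hden t Ht).
    apply (ex_derive_continuous (K:=R_AbsRing) (V:=R_NormedModule)). unfold df. auto_derive.
    split. exists (ff' lam t). apply ff_der; exact HS.
    split. exists (gg' lam t). apply gg_der; exact HS.
    split; [lra | exact I]. }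
  assert (HI := is_RInt_derive Fa df 0 (2*PI) Hder Hcont).
  assert (HF2 : Fa (2*PI) = k * (- (PI * alpha))).
  { unfold Fa. rewrite ff_2, gg_2 by exact HS.
    replace (s1 * -1 / (c1 * 1)) with (- tan (PI*alpha)) by (unfold tan; fold c1 s1; field; lra).
    rewrite atan_opp, atan_tan by (split; nra). reflexivity. }
  assert (HF0 : Fa 0 = k * (PI * alpha)).
  { unfold Fa. rewrite ff_0, gg_0 by exact HS.
    replace (s1 * 1 / (c1 * 1)) with (tan (PI*alpha)) by (unfold tan; fold c1 s1; field; lra).
    rewrite atan_tan by (split; nra). reflexivity. }
  replace (2 * PI * alpha / sqrt lam * (sin (2 * PI * sqrt lam) / sin (2 * PI * alpha)))
    with (minus (Fa (2*PI)) (Fa 0)).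
  - apply (is_RInt_ext df).
    + intros x Hx. rewrite Rmin_left, Rmax_right in Hx by lra.
      unfold df, Cmod, w1. simpl fst; simpl snd. rewrite pow2_sqrt.
      * rewrite XY_norm. reflexivity.
      * rewrite XY_norm. assert (Hdt := Hden x (conj (Rlt_le _ _ (proj1 Hx)) (Rlt_le _ _ (proj2 Hx)))). lra.
    + exact HI.
  - rewrite HF2, HF0. unfold minus, plus, opp. simpl. unfold k. fold (Sg lam). rewrite Hsin2.
    field. repeat split; lra.
Qed.
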